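(* For all positive integers $r,k$, let $p$ be the smallest prime with $2k^2r^2<p$ and let $n=rp$. Then there exists a binary $(r,k)$-batch code of dimension $n$ and rate $\frac{r}{r+k}$; its redundancy equals $kp$.
   Context: A binary linear code of length $N$ encoding $n$ information bits $x_1,\dots,x_n$ is an $(r,k)$-batch code if for every multiset $\{i_1,\dots,i_k\}$ of indices there exist $k$ mutually disjoint sets $R_1,\dots,R_k$ of coordinates, each of size at most $r$, such that $x_{i_j}$ is a function of the codeword bits indexed by $R_j$. Its rate is $n/N$ and its redundancy is $N-n$. *)

(* Defs.v *)
From HB Require Import structures.
From mathcomp Require Import all_boot all_order all_algebra.
Set Implicit Arguments. Unset Strict Implicit. Unset Printing Implicit Defensive.
Import GRing.Theory.
Local Open Scope ring_scope.

(* A binary linear code of length N encoding n information bits is given by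
   its generator matrix G : 'M['F_2]_(n, N); the message x : 'rV_n is encoded
   as the codeword x *m G. *)

Definition restrict_cw (n N : nat) (G : 'M['F_2]_(n, N)) (R : {set 'I_N})
  (x : 'rV['F_2]_n) : 'I_N -> 'F_2 :=
  fun c => if c \in R then (x *m G) 0 c else 0.

Definition recoverable (n N : nat) (G : 'M['F_2]_(n, N)) (i : 'I_n)
  (R : {set 'I_N}) : Prop :=
  exists f : ('I_N -> 'F_2) -> 'F_2,
    forall x : 'rV['F_2]_n, f (restrict_cw G R x) = x 0 i.

(* (r,k)-batch code: for every multiset {i_1,...,i_k} (a family 'I_k -> 'I_n,
   repetitions allowed) there are k mutually disjoint recovery sets of size
   at most r. *)
Definition batch_code (r k n N : nat) (G : 'M['F_2]_(n, N)) : Prop :=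
  forall idx : 'I_k -> 'I_n,
    exists R : 'I_k -> {set 'I_N},
      (forall j j' : 'I_k, j != j' -> [disjoint R j & R j']) /\
      (forall j : 'I_k, (#|R j| <= r)%N) /\
      (forall j : 'I_k, recoverable G (idx j) (R j)).

(* Main.v *)
Require Import Defs.
From HB Require Import structures.
From mathcomp Require Import all_boot all_order all_algebra zify ring.
Import GRing.Theory.
Lemma arith_bound m k r : (0 < k)%N -> (m < r)%N -> (m + m * m * (k.-1 * (2 * k).-1) < 2 * k ^ 2 * r ^ 2)%N.
Proof.
move=> k0 mr.
have hK : k.-1 * (2 * k).-1 < 2 * k ^ 2.
  case: k k0 => // k' _.
  have -> : (2 * k'.+1).-1 = (2 * k').+1 by lia.
  rewrite /= expnS expn1; nia.
have e1 : m <= m * m by case: m {mr} => // m'; rewrite leq_pmulr.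
have s1 : m + m * m * (k.-1 * (2 * k).-1) <= m * m * (k.-1 * (2 * k).-1).+1.
  by rewrite mulnS leq_add2r.
have s2 : m * m * (k.-1 * (2 * k).-1).+1 <= m * m * (2 * k ^ 2).
  by rewrite leq_mul2l hK orbT.
have s3 : m * m * (2 * k ^ 2) < 2 * k ^ 2 * r ^ 2.
  rewrite mulnC expnS expn1 ltn_pmul2l ?muln_gt0 ?expn_gt0 ?k0 //.
  by apply: ltn_mul.
exact: leq_ltn_trans (leq_trans s1 s2) s3.
Qed.


Local Open Scope ring_scope.
Definition meets (P Ln : finType) (on : P -> Ln -> bool) (L M : Ln) := [exists z, on z L && on z M].
Arguments meets {P Ln} on L M.

Section Vchoice.
Variables (p k r : nat).
Hypothesis pr_p : prime p.

Definition Ev (l1 l2 l3 : nat) (w1 w2 w3 : 'F_p) : 'F_p :=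
  w1 * (l1%:R - l2%:R) + w2 * (l2%:R - l3%:R) + w3 * (l3%:R - l1%:R).

Lemma Ev_rot l1 l2 l3 w1 w2 w3 : Ev l1 l2 l3 w1 w2 w3 = Ev l2 l3 l1 w2 w3 w1.
Proof. rewrite /Ev; ring. Qed.

Lemma natF_eq (a b : nat) : (a < p)%N -> (b < p)%N -> (a%:R : 'F_p) = b%:R -> a = b.
Proof.
move=> ha hb E; have h1 := val_Fp_nat pr_p a; have h2 := val_Fp_nat pr_p b.
by rewrite E h2 !modn_small in h1.
Qed.

Lemma natF_sub_neq0 (a b : nat) : (a < p)%N -> (b < p)%N -> a != b -> (a%:R - b%:R : 'F_p) != 0.
Proof.
move=> ha hb hab; rewrite subr_eq0; apply/eqP => /natF_eq -/(_ ha hb) /eqP.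
by rewrite (negbTE hab).
Qed.

Definition goodv (m : nat) (v : nat -> 'F_p) :=
  (forall b b', (b < m)%N -> (b' < m)%N -> v b = v b' -> b = b') /\
  (forall l1 l2 l3 b1 b2 b3, (l1 < k)%N -> (l2 < k)%N -> (l3 < k)%N ->
     l1 != l2 -> l2 != l3 -> l1 != l3 ->
     (b1 < m)%N -> (b2 < m)%N -> (b3 < m)%N -> b1 != b2 -> b2 != b3 -> b1 != b3 ->
     Ev l1 l2 l3 (v b1) (v b2) (v b3) != 0).

Hypothesis kp : (2 * k ^ 2 * r ^ 2 < p)%N.
Hypothesis k0 : (0 < k)%N.
Hypothesis r0 : (0 < r)%N.

Definition badF (v : nat -> 'F_p) m (t : 'I_m * 'I_m * 'I_k.-1 * 'I_(2 * k).-1) : 'F_p :=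
  let a := ((t.2 : nat)%:R - (k.-1)%:R) / ((t.1.2 : nat).+1)%:R in
  v t.1.1.2 * (1 + a) - v t.1.1.1 * a.

Lemma kltp : (k < p)%N.
Proof.
apply: leq_ltn_trans kp.
have h1 : (1 <= r ^ 2)%N by rewrite expn_gt0 r0.
have h2 : (k <= k ^ 2)%N by rewrite -{1}(expn1 k) leq_pexp2l.
nia.
Qed.

Lemma first_slot v m (w : 'F_p) l1 l2 l3 b2 b3 :
  (l1 < k)%N -> (l2 < k)%N -> (l3 < k)%N -> l1 != l2 -> l2 != l3 -> l1 != l3 ->
  (b2 < m)%N -> (b3 < m)%N ->
  w \notin [set badF v m t | t : 'I_m * 'I_m * 'I_k.-1 * 'I_(2 * k).-1] ->
  Ev l1 l2 l3 w (v b2) (v b3) != 0.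
Proof.
move=> h1 h2 h3 n12 n23 n13 hb2 hb3 hw; apply/eqP => E0; move/negP: hw; apply.
have hk := kltp.
have d12 : (l1%:R - l2%:R : 'F_p) != 0 by apply: natF_sub_neq0 => //; lia.
pose a : 'F_p := (l2%:R - l3%:R) / (l1%:R - l2%:R).
have wE : w = v b3 * (1 + a) - v b2 * a.
  move: E0; rewrite /Ev => E0.
  apply: (mulIf d12).
  have aD : a * (l1%:R - l2%:R) = l2%:R - l3%:R by rewrite /a divfK.
  transitivity (v b3 * (l1%:R - l2%:R) + v b3 * (a * (l1%:R - l2%:R)) - v b2 * (a * (l1%:R - l2%:R))); last by ring.
  rewrite aD.
  have -> : w * (l1%:R - l2%:R) = w * (l1%:R - l2%:R) + v b2 * (l2%:R - l3%:R) + v b3 * (l3%:R - l1%:R)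
     - (v b2 * (l2%:R - l3%:R) + v b3 * (l3%:R - l1%:R)) by ring.
  rewrite E0; ring.
have [lt12|lt21] := ltnP l2 l1.
- apply/imsetP; exists (Ordinal hb2, Ordinal hb3,
     @Ordinal k.-1 (l1 - l2).-1 ltac:(lia), @Ordinal (2 * k).-1 (l2 + k.-1 - l3) ltac:(lia)) => //.
  rewrite wE /badF /=; congr (_ * (1 + _) - _ * _);
  rewrite /a; (have -> : ((l1 - l2).-1.+1 = l1 - l2)%N by lia);
  rewrite natrB; try lia; rewrite natrB; try lia; rewrite natrD; congr (_ / _); ring.
- have lt12 : (l1 < l2)%N by rewrite ltn_neqAle n12 lt21.
  apply/imsetP; exists (Ordinal hb2, Ordinal hb3,
     @Ordinal k.-1 (l2 - l1).-1 ltac:(lia), @Ordinal (2 * k).-1 (l3 + k.-1 - l2) ltac:(lia)) => //.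
  have e : forall x y : 'F_p, x / y = (- x) / (- y) by move=> x y; rewrite invrN mulrNN.
  rewrite wE /badF /=; congr (_ * (1 + _) - _ * _);
  rewrite /a e; (have -> : ((l2 - l1).-1.+1 = l2 - l1)%N by lia);
  rewrite natrB; try lia; rewrite natrB; try lia; rewrite natrD; congr (_ / _); ring.
Qed.


Lemma goodv_exists m : (m <= r)%N -> exists v, goodv m v.
Proof.
elim: m => [|m IH] hm.
  by exists (fun _ => 0); split => //.
have [v [vi ve]] := IH (ltnW hm).
pose Bad : {set 'F_p} := [set v (val i) | i : 'I_m] :|: [set badF v m t | t : 'I_m * 'I_m * 'I_k.-1 * 'I_(2 * k).-1].
have cB : (#|Bad| < #|'F_p|)%N.
  rewrite card_Fp //; apply: leq_ltn_trans (leq_card_setU _ _) _.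
  apply: leq_ltn_trans (leq_add (leq_imset_card _ _) (leq_imset_card _ _)) _.
  rewrite !cardE -!cardE !card_prod !card_ord.
  rewrite -mulnA; exact: ltn_trans (arith_bound m k r k0 hm) kp.
have [w wB] : exists w, w \notin Bad.
  apply/existsP; rewrite -negb_forall; apply/negP => /forallP hall.
  move: cB; rewrite ltnNge => /negP; apply; apply: subset_leq_card.
  by apply/subsetP => x _; apply: hall.
move: wB; rewrite in_setU negb_or => /andP [wB1 wB2].
exists (fun b => if b == m then w else v b); split.
  move=> b b' hb hb'.
  case: (eqVneq b m) => [eb|nb]; case: (eqVneq b' m) => [eb'|nb'].
  - by rewrite eb eb'.
  - have hb'' : (b' < m)%N by rewrite ltn_neqAle nb' -ltnS.
    move=> E; exfalso; move/negP: wB1; apply; apply/imsetP; exists (Ordinal hb'') => //=.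
  - have hb'' : (b < m)%N by rewrite ltn_neqAle nb -ltnS.
    move=> E; exfalso; move/negP: wB1; apply; apply/imsetP; exists (Ordinal hb'') => //=.
  - apply: vi.
    + by rewrite ltn_neqAle nb -ltnS.
    + by rewrite ltn_neqAle nb' -ltnS.
move=> l1 l2 l3 b1 b2 b3 h1 h2 h3 n12 n23 n13 hb1 hb2 hb3 m12 m23 m13.
rewrite /=.
have lt_of : forall b, (b < m.+1)%N -> b != m -> (b < m)%N.
  by move=> b hb nb; rewrite ltn_neqAle nb -ltnS.
have n21 : b2 != b1 by rewrite eq_sym.
have n32 : b3 != b2 by rewrite eq_sym.
have n31 : b3 != b1 by rewrite eq_sym.
case: (eqVneq b1 m) => [e1|nb1].
  subst b1; rewrite (negbTE n21) (negbTE n31).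
  apply: (first_slot _ m) => //; exact: lt_of.
case: (eqVneq b2 m) => [e2|nb2].
  subst b2; rewrite (negbTE n32).
  rewrite Ev_rot; apply: (first_slot _ m) => //; try (by rewrite eq_sym);
    exact: lt_of.
case: (eqVneq b3 m) => [e3|nb3].
  subst b3.
  rewrite Ev_rot Ev_rot; apply: (first_slot _ m) => //; try (by rewrite eq_sym);
    exact: lt_of.
apply: ve => //; exact: lt_of.
Qed.

End Vchoice.

Section Greedy.
Variables (k : nat) (P Ln : finType) (on : P -> Ln -> bool) (ln : P -> 'I_k -> Ln).
Hypothesis onln : forall x l, on x (ln x l).
Hypothesis P1 : forall x z l l', x != z -> on z (ln x l) -> on z (ln x l') -> l = l'.
Hypothesis Q : forall x L l1 l2, ~~ on x L -> meets on (ln x l1) L -> meets on (ln x l2) L -> l1 = l2.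
Variable X : 'I_k -> P.

Lemma meetsC L M : meets on L M = meets on M L.
Proof. by apply/existsP/existsP => -[z] /andP [h1 h2]; exists z; rewrite h1 h2. Qed.

Definition Inv (m : nat) (opt : 'I_k -> option 'I_k) :=
  [/\ forall j : 'I_k, (j < m)%N -> opt j != None,
      forall j l, opt j = Some l -> forall j'', on (X j'') (ln (X j) l) -> X j'' = X j &
      forall j j' l l', j != j' -> opt j = Some l -> opt j' = Some l' ->
        if X j == X j' then l != l' else ~~ meets on (ln (X j) l) (ln (X j') l')].

Lemma Inv0 : Inv 0 (fun _ => None).
Proof. by split. Qed.

Lemma Inv_step m opt : (m < k)%N -> Inv m opt -> exists opt', Inv m.+1 opt'.
Proof.
move=> hmk [ia ic id].
pose mo := Ordinal hmk; pose x := X mo.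
pose beta (j' : 'I_k) : 'I_k :=
  match opt j' with
  | Some l' => if X j' == x then l' else odflt l' [pick l0 | meets on (ln x l0) (ln (X j') l')]
  | None => odflt j' [pick l0 | on (X j') (ln x l0)]
  end.
have [l hl] : exists l, l \notin beta @: [set~ mo].
  apply/existsP; rewrite -negb_forall; apply/negP => /forallP hall.
  have : (#|'I_k| <= #|beta @: [set~ mo]|)%N.
    by apply: subset_leq_card; apply/subsetP => z _; apply: hall.
  move/leq_trans => /(_ _ (leq_imset_card _ _)).
  rewrite cardsC1 card_ord => h.
  have k0 := leq_ltn_trans (leq0n m) hmk.
  lia.
have notb : forall j', j' != mo -> beta j' != l.
  move=> j' nj; apply/eqP => e; move/negP: hl; apply; apply/imsetP; exists j' => //.
  by rewrite !inE.
have hc : forall j'', on (X j'') (ln x l) -> X j'' = x.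
  move=> j'' hon; apply/eqP; apply/negPn/negP => nx.
  have nj : j'' != mo by apply: contraNneq nx => ->.
  move: (notb _ nj); rewrite /beta.
  case eo: (opt j'') => [l''|].
  - rewrite (negbTE nx).
    case: pickP => [l0 hl0|/(_ l)] /=.
    + move/eqP; apply; apply: (Q x (ln (X j'') l'') l0 l _ hl0).
      * apply/negP => hx; move: (ic _ _ eo mo hx) => e; by move: nx; rewrite -e /x eqxx.
      * by apply/existsP; exists (X j''); rewrite hon onln.
    + by rewrite /meets; move/negbT; rewrite negb_exists => /forallP /(_ (X j'')); rewrite hon onln.
  - case: pickP => [l0 hl0|/(_ l)] /=.
    + move/eqP; apply; apply: (P1 x (X j'') l0 l _ hl0 hon).
      by rewrite eq_sym.
    + by rewrite hon.
have hd : forall j' l', j' != mo -> opt j' = Some l' ->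
    if x == X j' then l != l' else ~~ meets on (ln x l) (ln (X j') l').
  move=> j' l' nj eo; move: (notb _ nj); rewrite /beta eo eq_sym.
  case: (eqVneq x (X j')) => [_|nx] /=; first by rewrite eq_sym.
  move=> hb; apply/negP => hm; move: hb.
  case: pickP => [l0 hl0|/(_ l)] /=.
  + move/eqP; apply; apply: (Q x (ln (X j') l') l l0 _ hm hl0).
    apply/negP => hx; move: (ic _ _ eo mo hx) => e; move/eqP: nx; apply; exact: e.
  + by rewrite hm.
exists (fun j => if j == mo then Some l else opt j); split.
- move=> j hj; case: (eqVneq j mo) => [_|nj] //.
  apply: ia; have h : (j : nat) != m by apply: contra nj => /eqP e; apply/eqP/val_inj.
  by rewrite ltn_neqAle h -ltnS.
- move=> j l1; case: (eqVneq j mo) => [ej|nj].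
  + subst j; move=> [<-]; exact: hc.
  + exact: ic.
- move=> j j' l1 l2 njj'; case: (eqVneq j mo) => [ej|nj]; case: (eqVneq j' mo) => [ej'|nj'].
  + by move: njj'; rewrite ej ej' eqxx.
  + subst j; move=> [<-] eo; exact: hd.
  + subst j'; move=> eo [<-]; move: (hd j l1 nj eo); rewrite eq_sym meetsC.
    by case: (X j == x) => //; rewrite eq_sym.
  + exact: id.
Qed.

Lemma Inv_all : exists opt, Inv k opt.
Proof.
suff : forall m, (m <= k)%N -> exists opt, Inv m opt by apply.
elim => [|m IH] hm; first by exists (fun _ => None); exact: Inv0.
have [opt h] := IH (ltnW hm); exact: Inv_step h.
Qed.

Lemma choice_lines : exists l : 'I_k -> 'I_k,
  (forall j j'', on (X j'') (ln (X j) (l j)) -> X j'' = X j) /\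
  (forall j j', j != j' -> if X j == X j' then l j != l j' else ~~ meets on (ln (X j) (l j)) (ln (X j') (l j'))).
Proof.
have [opt [ia ic id]] := Inv_all.
exists (fun j => odflt j (opt j)); split.
- move=> j j''; have := ia j (ltn_ord j); case eo: (opt j) => [l|] //= _.
  exact: (ic _ _ eo j'').
- move=> j j' njj'.
  have := ia j (ltn_ord j); have := ia j' (ltn_ord j').
  case eo: (opt j) => [l|] //=; case eo': (opt j') => [l'|] //= _ _.
  exact: id eo eo'.
Qed.

End Greedy.

Section Code.
Variables (k r n M : nat) (P Ln : finType) (on : P -> Ln -> bool) (ln : P -> 'I_k -> Ln).
Hypothesis onln : forall x l, on x (ln x l).
Hypothesis P1 : forall x z l l', x != z -> on z (ln x l) -> on z (ln x l') -> l = l'.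
Hypothesis Q : forall x L l1 l2, ~~ on x L -> meets on (ln x l1) L -> meets on (ln x l2) L -> l1 = l2.
Hypothesis lninj : forall x l l', ln x l = ln x l' -> l = l'.
Hypothesis line_small : forall L, (#|[set z | on z L]| <= r)%N.
Variables (pt : 'I_n -> P) (lnOf : 'I_M -> Ln) (lidx : Ln -> 'I_M).
Hypothesis pt_inj : injective pt.
Hypothesis lidxK : forall L, lnOf (lidx L) = L.

Definition Hm : 'M['F_2]_(n, M) := \matrix_(i, c) (on (pt i) (lnOf c))%:R.
Definition Gm : 'M['F_2]_(n, n + M) := row_mx 1%:M Hm.

Lemma cwl (x : 'rV['F_2]_n) i : (x *m Gm) 0 (lshift M i) = x 0 i.
Proof. by rewrite /Gm mul_mx_row row_mxEl mulmx1. Qed.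

Lemma cwr (x : 'rV['F_2]_n) c : (x *m Gm) 0 (rshift n c) = \sum_i x 0 i * Hm i c.
Proof. by rewrite /Gm mul_mx_row row_mxEr mxE. Qed.

Lemma rank_Gm : \rank Gm = n.
Proof.
apply/eqP; rewrite eqn_leq rank_leq_row /=.
have e : Gm *m col_mx 1%:M 0 = 1%:M by rewrite /Gm mul_row_col mulmx1 mulmx0 addr0.
by rewrite -{1}(mxrank1 'F_2 n) -e mxrankM_maxl.
Qed.


Lemma lin_card L : (#|[set i | on (pt i) L]| <= r)%N.
Proof.
apply: leq_trans (line_small L).
rewrite -(card_imset _ pt_inj); apply: subset_leq_card.
by apply/subsetP => z /imsetP [i]; rewrite !inE => h ->.
Qed.

Lemma Gm_batch : batch_code r k Gm.
Proof.
move=> idx.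
have [l [hc hd]] := @choice_lines k P Ln on ln onln P1 Q (fun j => pt (idx j)).
pose L j := ln (pt (idx j)) (l j).
pose S j := [set i | on (pt i) (L j)] :\ idx j.
exists (fun j => (lshift M @: S j) :|: [set rshift n (lidx (L j))]); split; [|split].
- move=> j j' njj'; rewrite -setI_eq0; apply/eqP/setP => c; rewrite !inE.
  apply/negP => /andP [h1 h2].
  have key : forall i, i \in S j -> i \in S j' -> False.
    move=> i; rewrite !inE => /andP [n1 o1] /andP [n2 o2].
    move: (hd j j' njj'); case: eqP => [ex|nx].
    + move/eqP; apply; apply: (P1 (pt (idx j)) (pt i)) o1 _.
      * by apply/eqP => e; move/eqP: n1; apply; apply: pt_inj.
      * by rewrite /L ex.
    + by move/negP; apply; apply/existsP; exists (pt i); rewrite o1 o2.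
  have keyL : L j != L j'.
    apply/eqP => e; move: (hd j j' njj'); case: eqP => [ex|nx].
    + by move: e; rewrite /L ex => /lninj ->; rewrite eqxx.
    + have h : on (pt (idx j)) (L j) := onln _ _.
      rewrite e in h.
      by move/negP; apply; apply/existsP; exists (pt (idx j)); rewrite onln; exact: h.
  case/orP: h1 => [/imsetP [i hi ec]|/eqP ec]; subst c; case/orP: h2 => [/imsetP [i' hi' e]|/eqP e].
  + by move/lshift_inj: e => e; subst i'; exact: key hi hi'.
  + by move/eqP: e; rewrite eq_lrshift.
  + by move/eqP: e; rewrite eq_rlshift.
  + by move/rshift_inj: e => /(can_inj lidxK) e; move/eqP: keyL.
- move=> j; apply: leq_trans (leq_card_setU _ _) _.
  rewrite cards1 card_imset; last exact: lshift_inj.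
  have := lin_card (L j); rewrite (cardsD1 (idx j)) inE /L onln addnC addn1.
  done.
- move=> j; exists (fun w => w (rshift n (lidx (L j))) - \sum_(i in S j) w (lshift M i)) => x.
  rewrite /restrict_cw /=.
  rewrite ifT; last by rewrite !inE eqxx orbT.
  rewrite cwr.
  rewrite (eq_bigr (fun i => x 0 i)); last first.
    by move=> i hi; rewrite ifT ?cwl // !inE (imset_f _ hi).
  rewrite [X in X - _](eq_bigr (fun i => if on (pt i) (L j) then x 0 i else 0)); last first.
    by move=> i _; rewrite /Hm mxE lidxK; case: (on _ _); rewrite ?mulr1 ?mulr0.
  rewrite -big_mkcond (bigD1 (idx j)) /=; last by rewrite /L onln.
  rewrite (eq_bigl (fun i => i \in S j)) ?addrK //.
  by move=> i; rewrite !inE andbC.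
Qed.

End Code.

Section Geo.
Variables (p k r : nat) (v : nat -> 'F_p).
Hypothesis hk : (k < p)%N.
Hypothesis vi : forall b b', (b < r)%N -> (b' < r)%N -> v b = v b' -> b = b'.
Hypothesis ve : forall l1 l2 l3 b1 b2 b3, (l1 < k)%N -> (l2 < k)%N -> (l3 < k)%N ->
     l1 != l2 -> l2 != l3 -> l1 != l3 ->
     (b1 < r)%N -> (b2 < r)%N -> (b3 < r)%N -> b1 != b2 -> b2 != b3 -> b1 != b3 ->
     v b1 * (l1%:R - l2%:R) + v b2 * (l2%:R - l3%:R) + v b3 * (l3%:R - l1%:R) != 0.
Hypothesis natF_sub : forall a b : nat, (a < p)%N -> (b < p)%N -> a != b -> (a%:R - b%:R : 'F_p) != 0.

Definition Pt := ('I_r * 'F_p)%type.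
Definition Lnc := ('I_k * 'F_p)%type.
Definition onc (x : Pt) (L : Lnc) : bool := x.2 == L.2 + (L.1 : nat)%:R * v x.1.
Definition lnc (x : Pt) (l : 'I_k) : Lnc := (l, x.2 - (l : nat)%:R * v x.1).

Lemma onlnc x l : onc x (lnc x l).
Proof. by rewrite /onc /= subrK. Qed.

Lemma lnc_inj x l l' : lnc x l = lnc x l' -> l = l'.
Proof. by move/(congr1 fst). Qed.

Lemma oncE z L : onc z L -> L = lnc z L.1.
Proof. by case: L => l g; rewrite /onc /lnc /= => /eqP ->; rewrite addrK. Qed.

Lemma col_inj z z' L : onc z L -> onc z' L -> z.1 = z'.1 -> z = z'.
Proof.
case: z z' => [b c] [b' c'] /=; rewrite /onc /= => /eqP e1 /eqP e2 eb.
by subst b'; rewrite e1 e2.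
Qed.

Lemma small_c L : (#|[set z | onc z L]| <= r)%N.
Proof.
rewrite -(card_in_imset (f := fun z : Pt => z.1)).
  by apply: leq_trans (max_card _) _; rewrite card_ord.
by move=> z z'; rewrite !inE => h h' e; apply: col_inj _ _ _ h h' e.
Qed.

Lemma P1c x z l l' : x != z -> onc z (lnc x l) -> onc z (lnc x l') -> l = l'.
Proof.
move=> nxz; rewrite /onc /= => /eqP e1 /eqP e2.
apply/eqP; apply/negPn/negP => nl.
have d : ((l : nat)%:R - (l' : nat)%:R : 'F_p) != 0.
  by apply: natF_sub; [apply: ltn_trans hk | apply: ltn_trans hk | ].
have h : ((l : nat)%:R - (l' : nat)%:R) * (v z.1 - v x.1) = 0.
  have -> : ((l : nat)%:R - (l' : nat)%:R) * (v z.1 - v x.1) =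
    (x.2 - (l : nat)%:R * v x.1 + (l : nat)%:R * v z.1) - (x.2 - (l' : nat)%:R * v x.1 + (l' : nat)%:R * v z.1) by ring.
  by rewrite -e1 -e2 subrr.
move: h => /eqP; rewrite mulf_eq0 (negbTE d) /= subr_eq0 => /eqP /vi.
move=> /(_ (ltn_ord _) (ltn_ord _)) /val_inj e.
move/negP: nxz; apply; apply/eqP.
by case: x z e e1 {e2} => [b c] [b' c'] /= ->; rewrite subrK => ->.
Qed.

Lemma Qc x L l1 l2 : ~~ onc x L -> meets onc (lnc x l1) L -> meets onc (lnc x l2) L -> l1 = l2.
Proof.
move=> nx /existsP [z1 /andP [a1 b1]] /existsP [z2 /andP [a2 b2]].
apply/eqP; apply/negPn/negP => n12.
have nz1 : x != z1 by apply/eqP => e; move/negP: nx; apply; rewrite e.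
have nz2 : x != z2 by apply/eqP => e; move/negP: nx; apply; rewrite e.
have n1z2 : z1 != z2.
  by apply/eqP => e; move/negP: n12; apply; apply/eqP; apply: (P1c _ _ _ _ nz1 a1); rewrite e.
have EL1 : L = lnc z1 L.1 := oncE _ _ b1.
have EL2 : L = lnc z2 L.1 := oncE _ _ b2.
have E11 : lnc x l1 = lnc z1 l1 := oncE _ _ a1.
have E22 : lnc x l2 = lnc z2 l2 := oncE _ _ a2.
have n31 : L.1 != l1.
  by apply/eqP => e; move/negP: nx; apply; rewrite EL1 e -E11 onlnc.
have n32 : L.1 != l2.
  by apply/eqP => e; move/negP: nx; apply; rewrite EL2 e -E22 onlnc.
have c1 : x.1 != z1.1 by apply/eqP => e; move/eqP: nz1; apply; exact: col_inj _ _ _ (onlnc x l1) a1 e.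
have c2 : x.1 != z2.1 by apply/eqP => e; move/eqP: nz2; apply; exact: col_inj _ _ _ (onlnc x l2) a2 e.
have c12 : z1.1 != z2.1 by apply/eqP => e; move/eqP: n1z2; apply; exact: col_inj _ _ _ b1 b2 e.
have m12 : (l1 : nat) != l2 by rewrite val_eqE.
have m23 : (l2 : nat) != L.1 by rewrite val_eqE eq_sym.
have m13 : (l1 : nat) != L.1 by rewrite val_eqE eq_sym.
have d12 : (x.1 : nat) != z2.1 by rewrite val_eqE.
have d23 : (z2.1 : nat) != z1.1 by rewrite val_eqE eq_sym.
have d13 : (x.1 : nat) != z1.1 by rewrite val_eqE.
move/negP: (ve l1 l2 L.1 x.1 z2.1 z1.1 (ltn_ord l1) (ltn_ord l2) (ltn_ord L.1) m12 m23 m13 (ltn_ord x.1) (ltn_ord z2.1) (ltn_ord z1.1) d12 d23 d13); apply.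
move: a1 a2 b1 b2; rewrite /onc /= => /eqP e1 /eqP e2 /eqP e3 /eqP e4.
apply/eqP.
have -> : v x.1 * ((l1 : nat)%:R - (l2 : nat)%:R) + v z2.1 * ((l2 : nat)%:R - (L.1 : nat)%:R) + v z1.1 * ((L.1 : nat)%:R - (l1 : nat)%:R)
  = ((x.2 - (l2 : nat)%:R * v x.1 + (l2 : nat)%:R * v z2.1) - (x.2 - (l1 : nat)%:R * v x.1 + (l1 : nat)%:R * v z1.1))
    - ((L.2 + (L.1 : nat)%:R * v z2.1) - (L.2 + (L.1 : nat)%:R * v z1.1)) by ring.
by rewrite -e1 -e2 -e3 -e4 subrr.
Qed.
End Geo.

Theorem theorem11 (r k p : nat) :
  (0 < r)%N -> (0 < k)%N ->
  prime p -> (2 * k ^ 2 * r ^ 2 < p)%N ->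
  (forall q : nat, prime q -> (2 * k ^ 2 * r ^ 2 < q)%N -> (p <= q)%N) ->
  exists (N : nat) (G : 'M['F_2]_(r * p, N)),
    batch_code r k G /\ \rank G = (r * p)%N /\
    ((r * p)%:R / N%:R : rat) = r%:R / (r + k)%:R /\
    (N - r * p = k * p)%N.
Proof.
move=> r0 k0 pr hp _.
have [v [vi ve]] := @goodv_exists p k r pr hp k0 r0 r (leqnn r).
have hk : (k < p)%N := @kltp p k r pr hp k0 r0.
have nF : forall a b : nat, (a < p)%N -> (b < p)%N -> a != b -> (a%:R - b%:R : 'F_p) != 0.
  by move=> a b; apply: natF_sub_neq0.
pose on : 'I_r * 'F_p -> 'I_k * 'F_p -> bool := @onc p k r v.
pose ln : 'I_r * 'F_p -> 'I_k -> 'I_k * 'F_p := @lnc p k r v.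
have cardP : #|{: 'I_r * 'F_p}| = (r * p)%N by rewrite card_prod card_ord card_Fp.
have cardL : #|{: 'I_k * 'F_p}| = (k * p)%N by rewrite card_prod card_ord card_Fp.
pose pt (i : 'I_(r * p)) : 'I_r * 'F_p := enum_val (cast_ord (esym cardP) i).
pose lnOf (c : 'I_(k * p)) : 'I_k * 'F_p := enum_val (cast_ord (esym cardL) c).
pose lidx (L : 'I_k * 'F_p) : 'I_(k * p) := cast_ord cardL (enum_rank L).
have pt_inj : injective pt.
  by move=> i j /enum_val_inj /cast_ord_inj.
have lidxK : forall L, lnOf (lidx L) = L.
  by move=> L; rewrite /lnOf /lidx cast_ordK enum_rankK.
exists (r * p + k * p)%N, (Gm (r * p) (k * p) _ _ on pt lnOf); split; [|split; [|split]].
- apply: (@Gm_batch k r (r * p) (k * p) _ _ on ln _ _ _ _ _ pt lnOf lidx pt_inj lidxK).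
  + exact: onlnc.
  + exact: P1c.
  + exact: Qc.
  + exact: lnc_inj.
  + exact: small_c.
- exact: rank_Gm.
- rewrite -mulnDl !natrM invfM mulrACA divff ?mulr1 //.
  by rewrite Num.Theory.pnatr_eq0 -lt0n prime_gt0.
- by rewrite addKn.
Qed.
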